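(* Let $\Gamma$ be a finite, simple, connected graph and $G\le\mathrm{Aut}(\Gamma)$ acting transitively on $\mathrm{E}(\Gamma)$. Let $\{u,v\}$ be an edge of $\Gamma$ and let $N$ be a normal subgroup of $G$ such that $N_v^{\Gamma(v)}$ is transitive. Let $A$ be the set of vertices $a$ of $\Gamma$ such that there is a path of even length between $u$ and $a$. Then $N$ acts transitively on $A$.
   Context: $N_v^{\Gamma(v)}$ is the permutation group induced by the stabiliser $N_v$ of $v$ in $N$ on the neighbourhood $\Gamma(v)$ of $v$. *)

(* Defs.v *)
From mathcomp Require Import all_boot all_fingroup.
Set Implicit Arguments. Unset Strict Implicit. Unset Printing Implicit Defensive.

Definition walk_of_length (V : finType) (e : rel V) (k : nat) (x y : V) : Prop :=
  exists p : seq V, [/\ size p = k, path e x p & last x p = y].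

Definition even_reach (V : finType) (e : rel V) (u a : V) : Prop :=
  exists k, walk_of_length e (2 * k) u a.

Definition is_graph_aut (V : finType) (e : rel V) (g : {perm V}) : Prop :=
  forall x y, e (g x) (g y) = e x y.

Definition edge_transitive (V : finType) (e : rel V) (G : {set {perm V}}) : Prop :=
  forall x y x' y', e x y -> e x' y' ->
    exists2 g, g \in G &
      ((g x == x') && (g y == y')) || ((g x == y') && (g y == x')).

Definition local_transitive (V : finType) (e : rel V) (N : {set {perm V}}) (v : V) : Prop :=
  forall w w', e v w -> e v w' ->
    exists2 n, n \in N & (n v = v /\ n w = w').

(* Main.v *)
Require Import Defs.
From mathcomp Require Import all_boot all_fingroup.
Local Open Scope group_scope.

Lemma key_lem (V : finType) (e : rel V) (G N : {group {perm V}})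
  (HGaut : forall g, g \in G -> is_graph_aut e g)
  (v : V) (HN : (N <| G)%g) (Hloc : local_transitive e N v) x y z g :
  g \in G -> g v = x -> e x y -> e x z -> exists2 n, n \in N & n y = z.
Proof.
move=> gG gv exy exz.
have giG : g^-1 \in G by rewrite groupV.
have ex1 : forall w, e x w -> e v (g^-1 w).
  move=> w exw; have := HGaut _ giG x w; rewrite -{1}gv permK => ->; done.
have [n nN [_ nE]] := Hloc _ _ (ex1 _ exy) (ex1 _ exz).
exists (n ^ g)%g.
  have nG : g \in 'N(N)%g by apply: (subsetP (normal_norm HN)).
  by rewrite memJ_norm.
by rewrite /conjg !permM nE permKV.
Qed.

Definition Rp (V : finType) (G : {group {perm V}}) (u v y : V) : Prop :=
  (exists2 g, g \in G & g u = y) \/ (exists2 h, h \in G & h u = v).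

Lemma stepP (V : finType) (e : rel V) (G : {group {perm V}})
  (HGedge : edge_transitive e G) (u v : V) (Huv : e u v) y x :
  @Rp V G u v y -> e y x -> exists2 g, g \in G & g v = x.
Proof.
move=> Ry eyx.
have [g gG /orP[/andP[/eqP gu /eqP gv]|/andP[/eqP gu /eqP gv]]] := HGedge _ _ _ _ Huv eyx.
  by exists g.
case: Ry => [[g1 g1G g1u]|[h hG hu]].
  have hu : (g1 * g^-1) u = v.
    rewrite permM g1u -gv. rewrite permK. done.
  exists ((g1 * g^-1)^-1 * g)%g; first by rewrite !(groupM, groupV).
  by rewrite permM -hu permK gu.
exists (h^-1 * g)%g; first by rewrite groupM ?groupV.
by rewrite permM -hu permK gu.
Qed.

Lemma stepR (V : finType) (e : rel V) (G : {group {perm V}})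
  (HGedge : edge_transitive e G) (u v : V) (Huv : e u v) x z :
  (exists2 g, g \in G & g v = x) -> e x z -> @Rp V G u v z.
Proof.
move=> [g2 g2G g2v] exz.
have [g gG /orP[/andP[/eqP gu /eqP gv]|/andP[/eqP gu /eqP gv]]] := HGedge _ _ _ _ Huv exz.
  right; exists (g * g2^-1)%g; first by rewrite groupM ?groupV.
  by rewrite permM gu -g2v permK.
by left; exists g.
Qed.

Theorem lemma2p6 (V : finType) (e : rel V)
  (Hsym : symmetric e) (Hirr : irreflexive e)
  (Hconn : forall x y : V, connect e x y)
  (G N : {group {perm V}})
  (HGaut : forall g, g \in G -> is_graph_aut e g)
  (HGedge : edge_transitive e G)
  (u v : V) (Huv : e u v)
  (HN : (N <| G)%g)
  (Hloc : local_transitive e N v) :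
  forall a b : V, even_reach e u a -> even_reach e u b ->
    exists2 n, n \in N & n a = b.
Proof.
have main : forall (k : nat) (y : V) (p : seq V), (exists2 n, n \in N & n u = y) -> @Rp V G u v y ->
    size p = (2 * k)%N -> path e y p ->
    exists2 n, n \in N & n u = last y p.
  elim=> [|k IH] y p Ty Ry.
    by case: p => // _ _.
  case: p => [|x [|z p]] sp; first by rewrite mulnS in sp.
    by rewrite mulnS in sp.
  move=> /= /andP[eyx /andP[exz pp]].
  have Px := @stepP V e G HGedge u v Huv y x Ry eyx.
  have Rz := @stepR V e G HGedge u v Huv x z Px exz.
  apply: (IH z p) => //; last by move: sp; rewrite mulnS /= !addSn; case.
  case: Ty => n0 n0N n0u; case: Px => g gG gv.
  have [|n1 n1N n1y] := @key_lem V e G N HGaut v HN Hloc x y z g gG gv _ exz; first by rewrite Hsym.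
  exists (n0 * n1)%g; first by rewrite groupM.
  by rewrite permM n0u n1y.
have Tall : forall a, even_reach e u a -> exists2 n, n \in N & n u = a.
  move=> a [k [p [sp pp lp]]]; rewrite -lp.
  apply: (main k u p) => //; first by exists 1%g; rewrite ?group1 ?perm1.
  by left; exists 1%g; rewrite ?group1 ?perm1.
move=> a b /Tall [na naN nau] /Tall [nb nbN nbu].
exists (na^-1 * nb)%g; first by rewrite groupM ?groupV.
by rewrite permM -nau permK.
Qed.
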